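(* Let $X_1,\dots,X_n$ be completely regular continua, let $f_i:X_i\to X_i$ be continuous for $1\le i\le n$, and let $f:X_1\times\dots\times X_n\to X_1\times\dots\times X_n$ be defined by $f(x_1,\dots,x_n)=(f_1(x_1),\dots,f_n(x_n))$. Then every totally periodic $\omega$-limit set of $f$ is finite.
   Context: A continuum is a compact connected metric space; it is completely regular if every subcontinuum with more than one point has non-empty interior. For a continuous map $g$ of a compact metric space $Y$ and $y\in Y$, $\omega_g(y)=\{z:\ \exists\, n_i\to+\infty,\ g^{n_i}(y)\to z\}$; it is totally periodic if each of its points $z$ satisfies $g^m(z)=z$ for some $m\ge1$. *)

(* Defs.v *)
From HB Require Import structures.
From mathcomp Require Import all_boot all_order all_algebra.
From mathcomp Require Import all_classical all_reals all_analysis.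
Set Implicit Arguments. Unset Strict Implicit. Unset Printing Implicit Defensive.
Import Order.TTheory GRing.Theory Num.Theory.
Local Open Scope classical_set_scope.

(* A continuum: a compact connected metric space (metric = Hausdorff pseudometric). *)
Definition continuum {R : realType} (X : pseudoMetricType R) : Prop :=
  hausdorff_space X /\ compact [set: X] /\ connected [set: X].

Definition subcontinuum {T : topologicalType} (A : set T) : Prop :=
  A !=set0 /\ compact A /\ connected A.

Definition completely_regular_continuum {R : realType} (X : pseudoMetricType R)
  : Prop :=
  continuum X /\
  forall A : set X, subcontinuum A ->
    (exists x y, A x /\ A y /\ x <> y) -> (A^°) !=set0.

Definition omega_limit {T : topologicalType} (g : T -> T) (y : T) : set T :=
  [set z | exists u : nat -> nat,
      u @ \oo --> \oo /\ (fun k => iter (u k) g y) @ \oo --> z].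

Definition totally_periodic {T : Type} (g : T -> T) (A : set T) : Prop :=
  forall z, A z -> exists m : nat, (0 < m)%N /\ iter m g z = z.

Definition prod_map {n : nat} {X : 'I_n -> topologicalType}
  (f : forall i, X i -> X i) : prod_topology X -> prod_topology X :=
  fun x i => f i (x i).

(* Main.v *)
Require Import Defs.
From HB Require Import structures.
From mathcomp Require Import all_boot all_order all_algebra.
From mathcomp Require Import all_classical all_reals all_analysis.
From mathcomp Require Import lra.
Import Order.TTheory GRing.Theory Num.Theory Num.Def.
Local Open Scope classical_set_scope.
Local Open Scope ring_scope.

Section General.
Context {R : realType} {T : pseudoMetricType R}.

Definition Cl (s : nat -> T) : set T :=
  [set z | forall e, 0 < e -> forall N, exists2 k, (N <= k)%N & ball z e (s k)].

Lemma clusterP (s : nat -> T) (P : nat -> Prop) :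
  compact [set: T] -> (forall N, exists2 k, (N <= k)%N & P k) ->
  exists z, forall e, 0 < e -> forall N, exists k, [/\ (N <= k)%N, P k & ball z e (s k)].
Proof.
move=> cT Pinf.
pose B := fun N => [set x | exists k, [/\ (N <= k)%N, P k & x = s k]].
have FF : Filter (filter_from [set: nat] B).
  apply: filter_from_filter; first by exists 0%N.
  move=> i j _ _; exists (maxn i j) => // x [k [ik Pk ->]]; split.
    by exists k; split => //; apply: leq_trans ik; rewrite leq_maxl.
  by exists k; split => //; apply: leq_trans ik; rewrite leq_maxr.
have PF : ProperFilter (filter_from [set: nat] B).
  apply: filter_from_proper => N _.
  by have [k Nk Pk] := Pinf N; exists (s k), k.
have [z [_ cz]] := cT _ PF (filterT).
exists z => e e0 N.
have [x [[k [Nk Pk ->]] bx]] := cz (B N) (ball z e) (ex_intro2 _ _ N I (fun _ h => h)) (nbhsx_ballx z _ e0).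
by exists k.
Qed.

Lemma ball_eq (a b : T) : hausdorff_space T ->
  (forall e, 0 < e -> ball a e b) -> a = b.
Proof.
move=> hT H; apply: (close_eq hT); rewrite ball_close => eps; exact: H.
Qed.

Lemma omega_Cl (g : T -> T) y : omega_limit g y `<=` Cl (fun k => iter k g y).
Proof.
move=> z [u [hu hs]] e e0 N.
have h1 : \forall k \near \oo, (N <= u k)%N := hu _ (nbhs_infty_ge N).
have := filter_ex (filterI h1 ((cvg_ballP _ _).1 hs e e0)).
by move=> [k [Nk bk]]; exists (u k).
Qed.

Lemma Cl_omega (g : T -> T) y : Cl (fun k => iter k g y) `<=` omega_limit g y.
Proof.
move=> z Hz.
have H : forall j : nat, exists k, (j <= k)%N /\ ball z (j.+1%:R^-1) (iter k g y).
  move=> j; have [k jk bk] := Hz (j.+1%:R^-1) ltac:(by rewrite invr_gt0) j.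
  by exists k.
pose u := fun j => proj1_sig (cid (H j)).
have uge j : (j <= u j)%N by rewrite /u; case: cid => k [].
have ub j : ball z (j.+1%:R^-1) (iter (u j) g y) by rewrite /u; case: cid => k [].
exists u; split.
  move=> A [N _ NA]; exists N => // j /= Nj; apply: NA; exact: leq_trans Nj (uge j).
apply/cvg_ballP => e e0.
have := near_infty_natSinv_lt (PosNum e0).
move=> [N _ NA]; exists N => // j /= Nj.
apply: le_ball (ub j); apply/ltW; exact: (NA j Nj).
Qed.


Lemma FinMin (M : nat) (Q : nat -> R -> nat -> Prop) :
  (forall t e e' N N', Q t e N -> 0 < e' -> e' <= e -> (N <= N')%N -> Q t e' N') ->
  (forall t, (t < M)%N -> exists2 e, 0 < e & exists N, Q t e N) ->
  exists2 e, 0 < e & exists N, forall t, (t < M)%N -> Q t e N.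
Proof.
move=> Qmon; elim: M => [|M IH] H.
  by exists 1 => //; exists 0%N.
have [e1 e10 [N1 H1]] := IH (fun t tM => H t (ltnW tM)).
have [e2 e20 [N2 H2]] := H M (ltnSn M).
exists (minr e1 e2); first by rewrite lt_min e10 e20.
exists (maxn N1 N2) => t; rewrite ltnS leq_eqVlt => /orP[/eqP->|tM].
  apply: Qmon H2 _ _ _; [by rewrite lt_min e10 e20|by rewrite ge_min lexx orbT|exact: leq_maxr].
apply: Qmon (H1 t tM) _ _ _; [by rewrite lt_min e10 e20|by rewrite ge_min lexx|exact: leq_maxl].
Qed.

Lemma iter_period (g : T -> T) m x q : iter m g x = x -> iter (q * m)%N g x = x.
Proof.
move=> hx; elim: q => [|q IH] //=.
by rewrite mulSn iterD IH hx.
Qed.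

Lemma enter_finite (g : T -> T) y K m : hausdorff_space T -> (0 < m)%N ->
  iter m g (iter K g y) = iter K g y -> finite_set (Cl (fun k => iter k g y)).
Proof.
move=> hT m0 hp.
pose S := (fun j => iter (j + K)%N g y) @` `I_m.
have clA : forall k, (K <= k)%N -> exists2 t, (t < m)%N & iter k g y = iter (t + K)%N g y.
  move=> k Kk; set d := (k - K)%N; exists (d %% m)%N; first by rewrite ltn_mod.
  have -> : k = (d %% m + (d %/ m * m + K))%N.
    by rewrite addnA (addnC (d %% m)%N) -divn_eq /d subnK.
  by rewrite !iterD iter_period.
apply: (@sub_finite_set _ _ S); last exact: finite_image (finite_II m).
move=> z Hz; apply: contrapT => nS.
pose Q := fun t e (_ : nat) => ~ ball z e (iter (t + K)%N g y).
have Qmon : forall t e e' N N', Q t e N -> 0 < e' -> e' <= e -> (N <= N')%N -> Q t e' N'.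
  move=> t e1 e2 N N' nb e20 le21 _ b2; by apply: nb; move: b2; apply: le_ball.
have Qex : forall t, (t < m)%N -> exists2 e, 0 < e & exists N, Q t e N.
  move=> t tm; apply: contrapT => H; apply: nS; exists t => //.
  apply: esym; apply: ball_eq hT _ => e e0; apply: contrapT => nb.
  by apply: H; exists e => //; exists 0%N.
have [e e0 [N0 He]] := FinMin m Q Qmon Qex.
have [k Kk bk] := Hz e e0 K.
have [t tm ek] := clA k Kk.
by apply: (He t tm); rewrite /Q -ek.
Qed.


Lemma iter_cont (g : T -> T) n : continuous g -> continuous (iter n g).
Proof.
move=> gc; elim: n => [|n IH] x /=; first exact: cvg_id.
exact: (continuous_comp (IH x) (gc _)).
Qed.

Lemma fix_open (h : T -> T) w : hausdorff_space T -> continuous h -> h w <> w ->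
  exists2 s, 0 < s & forall v, ball w s v -> h v <> v.
Proof.
move=> hT hc hw.
have [e e0 ne] : exists2 e, 0 < e & ~ ball w (e + e) (h w).
  apply: contrapT => H; apply: hw; apply: esym; apply: ball_eq hT _ => e e0.
  apply: contrapT => nb; apply: H; exists (e / 2); first by rewrite divr_gt0.
  by rewrite -splitr.
have [d hd] := nbhs_ex (hc w _ (nbhsx_ballx (h w) _ e0)).
exists (minr d%:num e); first by rewrite lt_min e0 andbT.
move=> v bv hv; apply: ne.
have b1 : ball w e v by apply: le_ball bv; rewrite ge_min lexx orbT.
have b2 : ball (h w) e (h v) by apply: hd; apply: le_ball bv; rewrite ge_min lexx.
rewrite hv in b2; exact: ball_triangle b1 (ball_sym b2).
Qed.

Lemma baire (Om : set T) (E : nat -> set T) (p0 : T) : compact [set: T] ->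
  (forall z, (forall e, 0 < e -> exists2 w, Om w & ball z e w) -> Om z) ->
  (forall m w, ~ E m w -> exists2 s, 0 < s & forall v, ball w s v -> ~ E m v) ->
  (forall z, Om z -> exists m, E m z) -> Om p0 ->
  exists m p r, [/\ Om p, 0 < r & forall w, Om w -> ball p r w -> E m w].
Proof.
move=> cT Omc Ec cov Op0; apply: contrapT => H.
have H' : forall m p r, Om p -> 0 < r -> exists w, [/\ Om w, ball p r w & ~ E m w].
  move=> m p r Op r0; apply: contrapT => nw; apply: H; exists m, p, r; split => //.
  move=> w Ow bw; apply: contrapT => nE; apply: nw; by exists w.
have st : forall mq : nat * (T * R), exists q' : T * R,
    (Om mq.2.1 /\ 0 < mq.2.2) -> [/\ Om q'.1, 0 < q'.2, q'.2 <= mq.2.2 / 2,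
      ball mq.2.1 (mq.2.2 / 2) q'.1 & forall v, ball q'.1 (q'.2 + q'.2) v -> ~ E mq.1 v].
  move=> [m [p r]] /=; have [[Op r0]|] := pselect (Om p /\ 0 < r); last first.
    by move=> nn; exists (p, r) => /= h; exfalso; exact: nn h.
  have r20 : 0 < r / 2 by rewrite divr_gt0.
  have [w [Ow bw nE]] := H' m p (r / 2) Op r20.
  have [s s0 hs] := Ec m w nE.
  have s20 : 0 < s / 2 by rewrite divr_gt0.
  exists (w, minr (r / 2) (s / 2)) => _ /=; split => //.
  - by rewrite lt_min r20 s20.
  - by rewrite ge_min lexx.
  - move=> v bv; apply: hs; apply: le_ball bv.
    by rewrite [leRHS]splitr; apply: lerD; rewrite ge_min lexx orbT.
have [stf hstf] := choice st.
pose q := fix q j := match j with 0%N => (p0, 1) | j'.+1 => stf (j', q j') end.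
have qS j : q j.+1 = stf (j, q j) by [].
have good : forall j, Om (q j).1 /\ 0 < (q j).2.
  elim=> [|j [Oj rj]]; first by split.
  by have [] := hstf (j, q j) (conj Oj rj); rewrite -qS.
have nest : forall l j, (j < l)%N -> ball (q j).1 ((q j).2 - (q l).2) (q l).1.
  elim=> [//|l IH] j; rewrite ltnS leq_eqVlt => /orP[/eqP->|jl].
    have [_ _ le1 b1 _] := hstf (l, q l) (good l); rewrite -qS in le1 b1.
    apply: le_ball b1; move: le1 => /=; lra.
  have [_ _ le1 b1 _] := hstf (l, q l) (good l); rewrite -qS in le1 b1.
  have := ball_triangle (IH j jl) b1; apply: le_ball; move: le1 => /=; lra.
have nest' : forall l j, (j <= l)%N -> ball (q j).1 (q j).2 (q l).1.
  move=> l j; rewrite leq_eqVlt => /orP[/eqP->|jl].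
    exact: (ball_center _ (PosNum (good l).2)).
  apply: le_ball (nest l j jl); rewrite lerBlDr lerDl; exact: ltW (good l).2.
have [z Hz] := clusterP (fun l => (q l).1) (fun _ => True) cT
  (fun N => ex_intro2 _ _ N (leqnn N) I).
have Oz : Om z.
  apply: Omc => e e0; have [l [_ _ bl]] := Hz e e0 0%N.
  by exists (q l).1; [exact: (good l).1|].
have [m Em] := cov z Oz.
have [l [ml _ bl]] := Hz _ (good m.+1).2 m.+1.
have b2 := ball_triangle (nest' l m.+1 ml) (ball_sym bl).
have [_ _ _ _ hE] := hstf (m, q m) (good m); rewrite -qS in hE.
exact: hE z b2 Em.
Qed.


Lemma ball_closure (A : set T) z :
  (forall e, 0 < e -> exists2 w, A w & ball z e w) -> closure A z.
Proof.
move=> H B /nbhs_ex [d hd]; have [w Aw bw] := H d%:num (gt0 d).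
by exists w; split => //; apply: hd.
Qed.

Lemma closure_ball (A : set T) z e : closure A z -> 0 < e -> exists2 w, A w & ball z e w.
Proof.
move=> cz e0; have [w [Aw bw]] := cz _ (nbhsx_ballx z _ e0); by exists w.
Qed.

Definition Lim (D : nat -> set T) : set T :=
  [set z | forall e, 0 < e -> forall J, exists2 x, D J x & ball z e x].

Lemma Lim_pt D z : (forall e, 0 < e -> exists2 w, Lim D w & ball z e w) -> Lim D z.
Proof.
move=> H e e0 J; have e20 : 0 < e / 2 by rewrite divr_gt0.
have [w Lw bw] := H _ e20; have [x Dx bx] := Lw _ e20 J.
exists x => //; rewrite (splitr e); exact: ball_triangle bw bx.
Qed.

Lemma Lim_closed D : closed (Lim D).
Proof.
rewrite closure_id; apply/seteqP; split; first exact: subset_closure.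
move=> z cz; apply: Lim_pt => e e0; exact: closure_ball cz e0.
Qed.

Lemma sep_delta (A B : set T) : compact [set: T] ->
  (forall z, closure A z -> A z) -> (forall z, closure B z -> B z) ->
  (forall z, A z -> B z -> False) ->
  exists2 d, 0 < d & forall x y, A x -> B y -> ~ ball x d y.
Proof.
move=> cT cA cB AB; apply: contrapT => H.
have H' : forall t : nat, exists xy : T * T, [/\ A xy.1, B xy.2 & ball xy.1 (t.+1%:R^-1) xy.2].
  move=> t; apply: contrapT => nt; apply: H; exists (t.+1%:R^-1); first by rewrite invr_gt0.
  by move=> x y Ax By bxy; apply: nt; exists (x, y).
have [f hf] := choice H'.
have [z Hz] := clusterP (fun t => (f t).1) (fun _ => True) cT
  (fun N => ex_intro2 _ _ N (leqnn N) I).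
apply: (AB z).
  apply: cA; apply: ball_closure => e e0; have [t [_ _ bt]] := Hz e e0 0%N.
  by exists (f t).1 => //; have [] := hf t.
apply: cB; apply: ball_closure => e e0.
have e20 : 0 < e / 2 by rewrite divr_gt0.
have [N _ HN] := near_infty_natSinv_lt (PosNum e20).
have [t [Nt _ bt]] := Hz _ e20 N.
have [_ Bt bf] := hf t; exists (f t).2 => //.
rewrite (splitr e); apply: ball_triangle bt _; apply: le_ball bf.
exact: ltW (HN t Nt).
Qed.


Definition chainD (s : nat -> T) (a b : nat -> nat) : nat -> set T :=
  fun J x => exists j k, [/\ (J <= j)%N, (a j <= k <= b j)%N & x = s k].

Lemma chain_connected (s : nat -> T) (a b : nat -> nat) (p : T) : compact [set: T] ->
  (forall j, (a j <= b j)%N) ->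
  (forall e, 0 < e -> exists J, forall j, (J <= j)%N -> ball p e (s (a j))) ->
  (forall e, 0 < e -> exists J, forall j k, (J <= j)%N -> (a j <= k)%N -> (k < b j)%N ->
     ball (s k) e (s k.+1)) ->
  connected (Lim (chainD s a b)).
Proof.
move=> cT hab h2 h3; set L := Lim (chainD s a b).
have Lp : L p.
  move=> e e0 J; have [J' HJ'] := h2 e e0.
  exists (s (a (maxn J J'))); last by apply: HJ'; exact: leq_maxr.
  exists (maxn J J'), (a (maxn J J')); split => //; first exact: leq_maxl.
  by rewrite leqnn hab.
have key : forall A B : set T, (forall z, L z -> A z \/ B z) -> (forall z, B z -> L z) ->
    (forall z, closure A z -> A z) -> (forall z, closure B z -> B z) ->
    (forall z, A z -> B z -> False) -> A p -> forall z, B z -> False.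
  move=> A B LAB BL cA cB AB Ap.
  have [d d0 sep] := sep_delta A B cT cA cB AB.
  pose d' := d / 3; have d'0 : 0 < d' by rewrite divr_gt0.
  have [J1 HJ1] : exists J1, forall j k, (J1 <= j)%N -> (a j <= k <= b j)%N ->
      exists2 l, L l & ball l d' (s k).
    apply: contrapT => H.
    pose Pb := fun j => exists k, (a j <= k <= b j)%N /\ ~ exists2 l, L l & ball l d' (s k).
    have bad : forall N, exists2 j, (N <= j)%N & Pb j.
      move=> N; apply: contrapT => nb; apply: H; exists N => j k Nj hk.
      apply: contrapT => nl; apply: nb; exists j => //; by exists k; split.
    have H2 : forall j, exists k, Pb j -> (a j <= k <= b j)%N /\ ~ exists2 l, L l & ball l d' (s k).
      move=> j; have [[k hk]|nP] := pselect (Pb j); first by exists k.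
      by exists 0%N => /nP.
    have [c hc] := choice H2.
    have [z Hz] := clusterP (fun j => s (c j)) Pb cT bad.
    have Lz : L z.
      move=> e e0 J; have [j [Jj Pj bj]] := Hz e e0 J.
      exists (s (c j)) => //; exists j, (c j); split => //; exact: (hc j Pj).1.
    have [j [_ Pj bj]] := Hz d' d'0 0%N.
    by apply: (hc j Pj).2; exists z.
  have [J2 HJ2] := h3 d' d'0.
  have [J3 HJ3] := h2 d' d'0.
  pose J := maxn J1 (maxn J2 J3).
  have J1J : (J1 <= J)%N by rewrite leq_maxl.
  have J2J : (J2 <= J)%N by rewrite /J (leq_trans (leq_maxl J2 J3)) // leq_maxr.
  have J3J : (J3 <= J)%N by rewrite /J (leq_trans (leq_maxr J2 J3)) // leq_maxr.
  have inA : forall j k, (J <= j)%N -> (a j <= k <= b j)%N -> exists2 l, A l & ball l d' (s k).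
    move=> j k Jj /andP[ak kb].
    have : forall i, (a j + i <= b j)%N -> exists2 l, A l & ball l d' (s (a j + i)%N).
      elim=> [|i IH] h.
        exists p => //; rewrite addn0; apply: HJ3; exact: leq_trans J3J Jj.
      have hi : (a j + i < b j)%N by rewrite -addnS.
      have [l Al bl] := IH (ltnW hi).
      have st := HJ2 j (a j + i)%N (leq_trans J2J Jj) (leq_addr _ _) hi.
      have [l' Ll' bl'] := HJ1 j (a j + i.+1)%N (leq_trans J1J Jj)
        ltac:(by rewrite leq_addr h).
      case: (LAB l' Ll') => [Al'|Bl']; first by exists l'.
      exfalso; apply: (sep l l' Al Bl').
      rewrite addnS in bl'.
      have := ball_triangle (ball_triangle bl st) (ball_sym bl').
      by apply: le_ball; rewrite /d'; lra.
    by move=> /(_ (k - a j)%N); rewrite subnKC //; apply.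
  move=> z Bz.
  have [x [j [k [Jj hk ->]]] bx] := BL z Bz d' d'0 J.
  have [l Al bl] := inA j k Jj hk.
  apply: (sep l z Al Bz).
  have := ball_triangle bl (ball_sym bx).
  by apply: le_ball; rewrite /d'; lra.
apply: contrapT => /connectedPn [E [En LE [sep1 sep2]]].
have Lcl : forall z, closure L z -> L z.
  by move=> z; rewrite -(closure_id L).1 //; exact: Lim_closed.
have LAB : forall z, L z -> E false z \/ E true z by move=> z; rewrite LE.
have AL : forall z, E false z -> L z by move=> z Ez; rewrite LE; left.
have BL : forall z, E true z -> L z by move=> z Ez; rewrite LE; right.
have cA : forall z, closure (E false) z -> E false z.
  move=> z cz; have : L z by apply: Lcl; apply: closureS cz => w /AL.
  move=> /LAB [//|Bz]; exfalso.
  by have : (closure (E false) `&` E true) z by []; rewrite sep1.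
have cB : forall z, closure (E true) z -> E true z.
  move=> z cz; have : L z by apply: Lcl; apply: closureS cz => w /BL.
  move=> /LAB [Az|//]; exfalso.
  by have : (E false `&` closure (E true)) z by []; rewrite sep2.
have AB : forall z, E false z -> E true z -> False.
  move=> z Az Bz; have : (E false `&` closure (E true)) z.
    by split => //; exact: subset_closure.
  by rewrite sep2.
case: (LAB p Lp) => [Ap|Bp].
  have [z Ez] := En true; exact: (key _ _ LAB BL cA cB AB Ap z Ez).
have [z Ez] := En false.
apply: (key (E true) (E false) _ AL cB cA _ Bp z Ez).
  by move=> w /LAB [] ?; [right|left].
by move=> w ? ?; exact: (AB w).
Qed.


Lemma chain_p (s : nat -> T) (a b : nat -> nat) (p : T) :
  (forall j, (a j <= b j)%N) ->
  (forall e, 0 < e -> exists J, forall j, (J <= j)%N -> ball p e (s (a j))) ->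
  Lim (chainD s a b) p.
Proof.
move=> hab h2 e e0 J; have [J' HJ'] := h2 e e0.
exists (s (a (maxn J J'))); last by apply: HJ'; exact: leq_maxr.
exists (maxn J J'), (a (maxn J J')); split => //; first exact: leq_maxl.
by rewrite leqnn hab.
Qed.

Lemma chain_Cl (s : nat -> T) (a b : nat -> nat) :
  (forall j, (j <= a j)%N) -> Lim (chainD s a b) `<=` Cl s.
Proof.
move=> ha z Lz e e0 N; have [x [j [k [Nj /andP[ak _] ->]]] bx] := Lz e e0 N.
exists k => //; apply: leq_trans Nj (leq_trans (ha j) ak).
Qed.

Lemma small_steps (s : nat -> T) (h : T -> T) (p : T) (eps : R) (a b : nat -> nat) :
  compact [set: T] -> continuous h -> (forall k, s k.+1 = h (s k)) -> 0 < eps ->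
  (forall z, Cl s z -> ball p (eps + eps) z -> h z = z) ->
  (forall j, (j <= a j)%N) ->
  (forall j k, (a j <= k)%N -> (k < b j)%N -> ball p eps (s k)) ->
  forall e, 0 < e -> exists J, forall j k, (J <= j)%N -> (a j <= k)%N -> (k < b j)%N ->
     ball (s k) e (s k.+1).
Proof.
move=> cT hc sS eps0 fixh ha hin e e0; apply: contrapT => H.
pose Pb := fun j => exists k, [/\ (a j <= k)%N, (k < b j)%N & ~ ball (s k) e (s k.+1)].
have bad : forall N, exists2 j, (N <= j)%N & Pb j.
  move=> N; apply: contrapT => nb; apply: H; exists N => j k Nj ak kb.
  apply: contrapT => nl; apply: nb; exists j => //; by exists k.
have H2 : forall j, exists k, Pb j -> [/\ (a j <= k)%N, (k < b j)%N & ~ ball (s k) e (s k.+1)].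
  move=> j; have [[k hk]|nP] := pselect (Pb j); first by exists k.
  by exists 0%N => /nP.
have [c hc2] := choice H2.
have [z Hz] := clusterP (fun j => s (c j)) Pb cT bad.
have Clz : Cl s z.
  move=> e' e'0 N; have [j [Nj Pj bj]] := Hz e' e'0 N.
  have [ac _ _] := hc2 j Pj.
  by exists (c j) => //; exact: leq_trans Nj (leq_trans (ha j) ac).
have bz : ball p (eps + eps) z.
  have [j [_ Pj bj]] := Hz eps eps0 0%N; have [ac cb _] := hc2 j Pj.
  exact: ball_triangle (hin j (c j) ac cb) (ball_sym bj).
have hz := fixh z Clz bz.
have e20 : 0 < e / 2 by rewrite divr_gt0.
have [d hd] := nbhs_ex (hc z _ (nbhsx_ballx (h z) _ e20)).
have md0 : 0 < minr d%:num (e / 2) by rewrite lt_min e20 andbT.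
have [j [_ Pj bj]] := Hz _ md0 0%N; have [ac cb nb] := hc2 j Pj.
apply: nb; rewrite sS (splitr e).
apply: ball_triangle (ball_sym (le_ball _ bj)) _; first by rewrite ge_min lexx orbT.
rewrite -{1}hz; apply: hd; apply: le_ball bj; by rewrite ge_min lexx.
Qed.


Lemma seg (a : nat -> nat) J j : (forall i, (i <= a i)%N) -> (a J <= j)%N ->
  exists i, (J <= i)%N /\ (a i <= j <= a i.+1)%N.
Proof.
move=> ha aJ.
have exP : exists i, (a i <= j)%N by exists J.
have ubP : forall i, (a i <= j)%N -> (i <= j)%N by move=> i /(leq_trans (ha i)).
case: (ex_maxnP exP ubP) => i ai imax; exists i; split; first exact: imax.
rewrite ai /=; apply/contraT; rewrite -ltnNge => aij.
by have := imax _ (ltnW aij); rewrite ltnn.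
Qed.

Section OneDim.
Variables (g : T -> T) (y : T).
Hypotheses (hT : hausdorff_space T) (cT : compact [set: T]) (gc : continuous g).
Hypothesis CR : forall A : set T, subcontinuum A ->
  (exists x y, A x /\ A y /\ x <> y) -> (A^°) !=set0.
Hypothesis TP : totally_periodic g (Cl (fun k => iter k g y)).

Let s := fun k => iter k g y.
Let Om := Cl s.

Lemma Om_pt z : (forall e, 0 < e -> exists2 w, Om w & ball z e w) -> Om z.
Proof.
move=> H e e0 N; have e20 : 0 < e / 2 by rewrite divr_gt0.
have [w Ow bw] := H _ e20; have [k Nk bk] := Ow _ e20 N.
exists k => //; rewrite (splitr e); exact: ball_triangle bw bk.
Qed.

Lemma enter K : Om (s K) -> finite_set Om.
Proof.
move=> OK; have [m [m0 hm]] := TP _ OK; exact: enter_finite hT m0 hm.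
Qed.

Lemma cr_fin (C : set T) : C `<=` Om -> subcontinuum C ->
  (exists x y, C x /\ C y /\ x <> y) -> finite_set Om.
Proof.
move=> CO sC two; have [q Iq] := CR C sC two.
have [d hd] := nbhs_ex Iq.
have [k _ bk] := CO q (interior_subset Iq) d%:num (gt0 d) 0%N.
by apply: (enter k); apply: CO; apply: hd.
Qed.

Lemma sub_Cl M t : (0 < M)%N -> Cl (fun j => iter (j * M + t)%N g y) `<=` Om.
Proof.
move=> M0 z Hz e e0 N; have [j Nj bj] := Hz e e0 N.
exists (j * M + t)%N => //; apply: leq_trans Nj _.
by apply: leq_trans (leq_addr _ _); rewrite leq_pmulr.
Qed.

Lemma chain_fin (M t : nat) (a b : nat -> nat) (p : T) (eps : R) :
  (0 < M)%N -> 0 < eps ->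
  (forall z, Cl (fun j => iter (j * M + t)%N g y) z -> ball p (eps + eps) z -> iter M g z = z) ->
  (forall j, (j <= a j)%N) -> (forall j, (a j <= b j)%N) ->
  (forall e, 0 < e -> exists J, forall j, (J <= j)%N ->
     ball p e (iter (a j * M + t)%N g y)) ->
  (forall j k, (a j <= k)%N -> (k < b j)%N -> ball p eps (iter (k * M + t)%N g y)) ->
  (exists q, Lim (chainD (fun j => iter (j * M + t)%N g y) a b) q /\ q <> p) ->
  finite_set Om.
Proof.
move=> M0 eps0 fixh ha hab h2 hin [q [Lq qp]].
set s' := fun j => iter (j * M + t)%N g y.
have sS : forall k, s' k.+1 = iter M g (s' k).
  by move=> k; rewrite /s' mulSn -addnA iterD.
have h3 := small_steps s' (iter M g) p eps a b cT (iter_cont g M gc) sS eps0 fixh ha hin.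
apply: (cr_fin (Lim (chainD s' a b))).
- move=> z Lz; apply: (sub_Cl M t M0); exact: chain_Cl s' a b ha z Lz.
- split; first by exists p; exact: chain_p s' a b p hab h2.
  split; first exact: subclosed_compact (Lim_closed _) cT (fun _ _ => I).
  exact: chain_connected s' a b p cT hab h2 h3.
- exists p, q; split; first exact: chain_p s' a b p hab h2.
  by split => // pq; apply: qp.
Qed.

Theorem one_dim_fin : finite_set Om.
Proof.
have [[p0 Op0]|nO] := pselect (exists p0, Om p0); last first.
  suff -> : Om = set0 by exact: finite_set0.
  by apply/seteqP; split => // z Oz; apply: nO; exists z.
have Ec : forall m w, ~ (iter m.+1 g w = w) ->
    exists2 s, 0 < s & forall v, ball w s v -> ~ (iter m.+1 g v = v).
  move=> m w nE; exact: fix_open hT (iter_cont g m.+1 gc) nE.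
have cov : forall z, Om z -> exists m, iter m.+1 g z = z.
  move=> z Oz; have [m [m0 hm]] := TP _ Oz; exists m.-1; by rewrite prednK.
have [m [p [r [Op r0 hfix]]]] := baire Om (fun m w => iter m.+1 g w = w) p0 cT
  Om_pt Ec cov Op0.
set M := m.+1; have M0 : (0 < M)%N by [].
have [t tM Clp] : exists2 t, (t < M)%N & Cl (fun j => iter (j * M + t)%N g y) p.
  apply: contrapT => H.
  pose Q := fun t e N => forall j, (N <= j)%N -> ~ ball p e (iter (j * M + t)%N g y).
  have Qmon : forall t e e' N N', Q t e N -> 0 < e' -> e' <= e -> (N <= N')%N -> Q t e' N'.
    move=> t' e1 e2 N N' hq _ le21 NN j Nj b2; apply: (hq j (leq_trans NN Nj)).
    by move: b2; apply: le_ball.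
  have Qex : forall t, (t < M)%N -> exists2 e, 0 < e & exists N, Q t e N.
    move=> t' tM; apply: contrapT => nq; apply: H; exists t' => // e e0 N.
    apply: contrapT => nb; apply: nq; exists e => //; exists N => j Nj bj.
    by apply: nb; exists j.
  have [e e0 [N HN]] := FinMin M Q Qmon Qex.
  have [k Nk bk] := Op e e0 (N * M)%N.
  apply: (HN (k %% M)%N (ltn_pmod _ M0) (k %/ M)%N).
    by rewrite leq_divRL.

  by rewrite -(divn_eq k M).
set s' := fun j => iter (j * M + t)%N g y.
pose eps := r / 4; have eps0 : 0 < eps by rewrite divr_gt0.
have fixh : forall z, Cl s' z -> ball p (eps + eps) z -> iter M g z = z.
  move=> z Cz bz; apply: hfix; first exact: (sub_Cl M t M0).
  by apply: le_ball bz; rewrite /eps; lra.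
have Hc : forall jl : nat * nat, exists k, (jl.2 <= k)%N /\ ball p (jl.1.+1%:R^-1) (s' k).
  move=> [j l]; have [k lk bk] := Clp (j.+1%:R^-1) ltac:(by rewrite invr_gt0) l.
  by exists k.
have [f hf] := choice Hc.
have conv_of : forall a : nat -> nat, (forall j, ball p (j.+1%:R^-1) (s' (a j))) ->
    forall e, 0 < e -> exists J, forall j, (J <= j)%N -> ball p e (s' (a j)).
  move=> a ha e e0; have [J _ HJ] := near_infty_natSinv_lt (PosNum e0).
  by exists J => j Jj; apply: le_ball (ha j); apply: ltW; exact: HJ.
case: (pselect (exists N, forall j, (N <= j)%N -> ball p eps (s' j))) => [[N HN]|H2].
- pose a := fix a j := match j with 0%N => f (0%N, N) | j'.+1 => f (j'.+1, (a j').+1) end.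
  have aS j : a j.+1 = f (j.+1, (a j).+1) by [].
  have alt j : (a j < a j.+1)%N by rewrite aS; exact: (hf (j.+1, (a j).+1)).1.
  have aN j : (N <= a j)%N.
    elim: j => [|j IH]; first exact: (hf (0%N, N)).1.
    exact: leq_trans IH (ltnW (alt j)).
  have ha j : (j <= a j)%N.
    elim: j => [//|j IH]; exact: leq_ltn_trans IH (alt j).
  have ab j : ball p (j.+1%:R^-1) (s' (a j)).
    by case: j => [|j]; [exact: (hf (0%N, N)).2|rewrite aS; exact: (hf (j.+1, (a j).+1)).2].
  pose b := fun j => a j.+1.
  have hab j : (a j <= b j)%N by exact: ltnW (alt j).
  have h2 := conv_of a ab.
  have hin : forall j k, (a j <= k)%N -> (k < b j)%N -> ball p eps (s' k).
    by move=> j k ak _; apply: HN; exact: leq_trans (aN j) ak.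
  case: (pselect (exists q, Lim (chainD s' a b) q /\ q <> p)) => [ex|nq].
    exact: (chain_fin M t a b p eps M0 eps0 fixh ha hab h2 hin ex).
  have Lp : forall q, Lim (chainD s' a b) q -> q = p.
    by move=> q Lq; apply: contrapT => qp; apply: nq; exists q.
  have conv : forall e, 0 < e -> exists N', forall j, (N' <= j)%N -> ball p e (s' j).
    move=> e e0; apply: contrapT => H.
    have bad : forall N', exists2 j, (N' <= j)%N & ~ ball p e (s' j).
      move=> N'; apply: contrapT => nb; apply: H; exists N' => j Nj.
      by apply: contrapT => nbj; apply: nb; exists j.
    have [z Hz] := clusterP s' (fun j => ~ ball p e (s' j)) cT bad.
    have Lz : Lim (chainD s' a b) z.
      move=> e' e'0 J; have [j [aJj _ bj]] := Hz e' e'0 (a J).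
      have [i [Ji /andP[aij jai]]] := seg a J j ha aJj.
      by exists (s' j) => //; exists i, j; split => //; rewrite aij jai.
    have zp := Lp z Lz; rewrite zp in Hz.
    have [j [_ nb bj]] := Hz e e0 0%N; exact: nb bj.
  apply: (@sub_finite_set _ _ ((fun i => iter i g p) @` `I_M)); last first.
    exact: finite_image (finite_II M).
  move=> z Oz; apply: contrapT => nS.
  pose Q := fun i e N => forall j, (N <= j)%N -> ~ ball z e (iter (i + (j * M + t))%N g y).
  have Qmon : forall t e e' N N', Q t e N -> 0 < e' -> e' <= e -> (N <= N')%N -> Q t e' N'.
    move=> t' e1 e2 N1 N' hq _ le21 NN j Nj b2; apply: (hq j (leq_trans NN Nj)).
    by move: b2; apply: le_ball.
  have Qex : forall i, (i < M)%N -> exists2 e, 0 < e & exists N, Q i e N.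
    move=> i iM.
    have [e0 e00 ne] : exists2 e0, 0 < e0 & ~ ball z (e0 + e0) (iter i g p).
      apply: contrapT => H; apply: nS; exists i => //.
      apply: esym; apply: ball_eq hT _ => e e0; apply: contrapT => nb.
      apply: H; exists (e / 2); first by rewrite divr_gt0.
      by rewrite -splitr.
    have [d hd] := nbhs_ex (iter_cont g i gc p _ (nbhsx_ballx _ _ e00)).
    have [N' HN'] := conv d%:num (gt0 d).
    exists e0 => //; exists N' => j Nj bj; apply: ne.
    have := hd _ (HN' j Nj); rewrite /s' /= -iterD => b2.
    exact: ball_triangle bj (ball_sym b2).
  have [e e0 [N' HN']] := FinMin M Q Qmon Qex.
  have [k Nk bk] := Oz e e0 (N' * M + t)%N.
  have tk : (t <= k)%N by apply: leq_trans Nk; rewrite leq_addl.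
  apply: (HN' ((k - t) %% M)%N (ltn_pmod _ M0) ((k - t) %/ M)%N).
    by rewrite leq_divRL // leq_subRL // addnC.
  by rewrite addnA (addnC ((k - t) %% M)%N) -divn_eq subnK.
- have H2' : forall N, exists k, (N <= k)%N && ~~ `[< ball p eps (s' k) >].
    move=> N; apply: contrapT => H; apply: H2; exists N => j Nj.
    apply: contrapT => nb; apply: H; exists j; rewrite Nj /=.
    by apply/negP => /asboolP.
  pose a := fun j => f (j, j).
  have ha j : (j <= a j)%N by exact: (hf (j, j)).1.
  have ab j : ball p (j.+1%:R^-1) (s' (a j)) by exact: (hf (j, j)).2.
  pose b := fun j => ex_minn (H2' (a j)).
  have hab j : (a j <= b j)%N.
    by rewrite /b; case: ex_minnP => k /andP[].
  have hb j : ~ ball p eps (s' (b j)).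
    by rewrite /b; case: ex_minnP => k /andP[_ /negP nb] _ bk; apply: nb; apply/asboolP.
  have hin : forall j k, (a j <= k)%N -> (k < b j)%N -> ball p eps (s' k).
    move=> j k ak; rewrite /b; case: ex_minnP => k' _ hmin kk'.
    apply: contrapT => nb.
    have := hmin k; rewrite ak /=.
    have -> : ~~ `[< ball p eps (s' k) >] by apply/negP => /asboolP.
    by move=> /(_ isT); rewrite leqNgt kk'.
  have h2 := conv_of a ab.
  apply: (chain_fin M t a b p eps M0 eps0 fixh ha hab h2 hin).
  have [q Hq] := clusterP (fun j => s' (b j)) (fun _ => True) cT
    (fun N => ex_intro2 _ _ N (leqnn N) I).
  exists q; split.
    move=> e e0 J; have [j [Jj _ bj]] := Hq e e0 J.
    by exists (s' (b j)) => //; exists j, (b j); split => //; rewrite hab leqnn.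
  move=> qp; rewrite qp in Hq.
  have [j [_ _ bj]] := Hq eps eps0 0%N; exact: hb j bj.
Qed.

End OneDim.

End General.


Local Close Scope ring_scope.

Theorem proposition1p7 (R : realType) (n : nat) (X : 'I_n -> pseudoMetricType R)
  (f : forall i, X i -> X i) :
  (forall i, completely_regular_continuum (X i)) ->
  (forall i, continuous (f i)) ->
  forall x : prod_topology X,
    totally_periodic (prod_map f) (omega_limit (prod_map f) x) ->
    finite_set (omega_limit (prod_map f) x).
Proof.
move=> CRi fc x TP.
set F := prod_map f.
have hX i : hausdorff_space (X i) := (CRi i).1.1.
have cX i : compact [set: X i] := (CRi i).1.2.1.
have crX i := (CRi i).2.
have cY : compact [set: prod_topology X].
  have := tychonoff cX.
  have -> : [set f : forall i, X i | forall i, [set: X i] (f i)] = [set: prod_topology X].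
    by apply/seteqP; split.
  done.
have iterP : forall m (v : prod_topology X) i, iter m F v i = iter m (f i) (v i).
  by elim=> [//|m IH] v i /=; rewrite -IH.
have TPi : forall i, totally_periodic (f i) (omega_limit (f i) (x i)).
  move=> i z [u [hu hz]].
  pose w := fun k => iter (u k) F x.
  have [c Hc] := clusterP w (fun _ => True) cY (fun N => ex_intro2 _ _ N (leqnn N) I).
  have Omc : omega_limit F x c.
    apply: Cl_omega => e e0 N.
    have [K _ HK] : \forall k \near \oo, (N <= u k)%N := hu _ (nbhs_infty_ge N).
    have [k [Kk _ bk]] := Hc e e0 K.
    by exists (u k) => //; exact: HK.
  have ci : c i = z.
    apply: ball_eq (hX i) _ => e e0.
    have e20 : (0 < e / 2)%R by rewrite divr_gt0.
    have hn : nbhs (c : prod_topology X) ((fun v : prod_topology X => v i) @^-1` ball (c i) (e / 2)%R).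
      exact: (@proj_continuous _ (fun j => X j) i c _ (nbhsx_ballx (c i) _ e20)).
    have [d hd] := nbhs_ex hn.
    have [K _ HK] := (cvg_ballP _ _).1 hz _ e20.
    have [k [Kk _ bk]] := Hc _ (gt0 d) K.
    have b1 := hd _ bk.
    have b2 := HK k Kk.
    rewrite (splitr e); apply: ball_triangle b1 _.
    by rewrite /w /proj /= iterP; exact: ball_sym b2.
  have [m [m0 hm]] := TP c Omc.
  by exists m; split => //; rewrite -ci -iterP hm.
have fini : forall i, finite_set (omega_limit (f i) (x i)).
  move=> i; apply: (sub_finite_set (@omega_Cl _ _ (f i) (x i))).
  apply: (one_dim_fin (f i) (x i) (hX i) (cX i) (fc i) (crX i)).
  by move=> z /Cl_omega Hz; exact: TPi i z Hz.
have sub : forall w, omega_limit F x w -> forall i, omega_limit (f i) (x i) (w i).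
  move=> w [u [hu hw]] i; exists u; split => //.
  have -> : (fun k => iter (u k) (f i) (x i)) =
      ((fun v : prod_topology X => v i) \o (fun k => iter (u k) F x)).
    by apply: funext => k /=; rewrite iterP.
  exact: (continuous_cvg _ (@proj_continuous _ (fun j => X j) i w) hw).
have enc : forall i, exists kf : nat * (X i -> nat),
    (forall z, omega_limit (f i) (x i) z -> (kf.2 z < kf.1)%N) /\
    {in omega_limit (f i) (x i) &, injective kf.2}.
  move=> i; have /finite_set_leP [k hk] := fini i.
  have /pcard_leP := hk; rewrite injfunPex => -[e efun einj].
  by exists (k, e); split.
pose kf := fun i => proj1_sig (cid (enc i)).
have kf1 i : forall z, omega_limit (f i) (x i) z -> ((kf i).2 z < (kf i).1)%N.
  by rewrite /kf; case: cid => ? [].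
have kf2 i : {in omega_limit (f i) (x i) &, injective (kf i).2}.
  by rewrite /kf; case: cid => ? [].
pose K := (\max_(i < n) (kf i).1)%N.
pose Phi := fun w : prod_topology X => [ffun i => (inord ((kf i).2 (w i)) : 'I_K.+1)].
have Phi_inj : {in omega_limit F x &, injective Phi}.
  move=> w w' /set_mem Ow /set_mem Ow' eP; apply: functional_extensionality_dep => i.
  have Oi := sub w Ow i; have Oi' := sub w' Ow' i.
  apply: (kf2 i); [exact: mem_set|exact: mem_set|].
  have := congr1 (fun h : {ffun 'I_n -> 'I_K.+1} => nat_of_ord (h i)) eP; rewrite /Phi /= !ffunE.
  have lt1 : forall z, omega_limit (f i) (x i) z -> ((kf i).2 z < K.+1)%N.
    move=> z Oz; rewrite ltnS; apply: leq_trans (ltnW (kf1 i z Oz)) _.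
    exact: (leq_bigmax (F := fun j => (kf j).1) i).
  by rewrite !inordK //; [exact: lt1|exact: lt1].
rewrite -(eq_finite_set (inj_card_eq Phi_inj)).
exact: finite_finset.
Qed.
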